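(* For all integers $n,m$, \[\Phi_{n,m}(u,v;1,1;z,w;q)=\frac{\Phi_{n,m}(u,v;z,w;q)-zwq^{m-1}\Phi_{n,m}(u/z,v/w;z,w;q)}{1-zwq^{-1}}.\] In particular $\Phi_{n,m}(1,1;1,1;z,w;q)=\frac{1-zwq^{n+m-1}}{1-zwq^{-1}}\Phi_{n,m}(z,w;q)$.
   Context: For $n\in\mathbb{Z}$, $(a;q)_n=(a;q)_\infty/(aq^n;q)_\infty$ ($1/(q;q)_n=0$ for $n<0$), $(a_1,\dots,a_k;q)_n=\prod_i(a_i;q)_n$. $\Phi_{n,m}(z,w;q):=\frac{(zwq;q)_{n+m}}{(q,zq,zwq;q)_n(q,wq,zwq;q)_m}$. $\Phi_{n,m}(u,v;z,w;q):=\Phi_{n,m}(z/q,w;q)-\frac{uz}{(z;q)_2}\Phi_{n-1,m}(zq,w/q;q)+\frac{uvzw^2}{(w,zw;q)_2}\Phi_{n-1,m-1}(z,wq;q)$. With $Q=\{y\in\mathbb{Z}^3:y_1+y_2+y_3=0\}$, $\Phi_{n,m;y}(z,w;q):=\frac{(zwq;q)_{n+m}}{(q;q)_{n-y_1}(zq;q)_{n-y_2}(zwq;q)_{n-y_3}(q;q)_{m+y_3}(wq;q)_{m+y_2}(zwq;q)_{m+y_1}}$, and, with $\rho=(1,2,3)$, $\sigma\in S_3$ in one-line notation, $\chi$ the indicator, \[\Phi_{n,m}(u,v;c,d;z,w;q):=\sum_{\sigma\in S_3}\operatorname{sgn}(\sigma)(uz)^{\sigma_1-1}(v/d)^{\chi(\sigma_3=1)}(c/u)^{\chi(\sigma_1=3)}(dw)^{3-\sigma_3}\Phi_{n,m;\sigma-\rho}(z/q,w/q;q).\]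 *)

(* Defs.v *)
From HB Require Import structures.
From mathcomp Require Import all_boot all_order all_algebra all_fingroup.
Set Implicit Arguments. Unset Strict Implicit. Unset Printing Implicit Defensive.
Import Order.TTheory GRing.Theory Num.Theory.
Local Open Scope ring_scope.

Section Defs.
Variable R : fieldType.

(* q-Pochhammer symbol (a;q)_n for n : int, i.e. (a;q)_oo/(a q^n;q)_oo:
   n >= 0 : prod_{i=0}^{n-1} (1 - a q^i)
   n = -N < 0 : 1 / prod_{i=1}^{N} (1 - a q^{-i}).
   Note: for a = q and n < 0 the product contains the factor 1 - q q^{-1} = 0,
   so (q;q)_n = 0^-1 = 0 and 1/(q;q)_n = 0, matching the paper's convention. *)
Definition qpoch (a q : R) (n : int) : R :=
  match n with
  | Posz k => \prod_(i < k) (1 - a * q ^+ i)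
  | Negz k => (\prod_(i < k.+1) (1 - a * q ^- i.+1))^-1
  end.

Definition Phi2 (n m : int) (z w q : R) : R :=
  qpoch (z * w * q) q (n + m) /
  (qpoch q q n * qpoch (z * q) q n * qpoch (z * w * q) q n *
   qpoch q q m * qpoch (w * q) q m * qpoch (z * w * q) q m).

Definition Phi4 (n m : int) (u v z w q : R) : R :=
  Phi2 n m (z / q) w q
  - u * z / qpoch z q 2 * Phi2 (n - 1) m (z * q) (w / q) q
  + u * v * z * w ^+ 2 / (qpoch w q 2 * qpoch (z * w) q 2)
      * Phi2 (n - 1) (m - 1) z (w * q) q.

Definition Phiy (n m y1 y2 y3 : int) (z w q : R) : R :=
  qpoch (z * w * q) q (n + m) /
  (qpoch q q (n - y1) * qpoch (z * q) q (n - y2) * qpoch (z * w * q) q (n - y3) *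
   qpoch q q (m + y3) * qpoch (w * q) q (m + y2) * qpoch (z * w * q) q (m + y1)).

(* one-line notation: sigma_i (i = 1,2,3) as a value in {1,2,3} *)
Definition sv (s : 'S_3) (i : nat) : nat := (s (inord i.-1)).+1.

Definition Phi6 (n m : int) (u v c d z w q : R) : R :=
  \sum_(s : 'S_3)
    (-1) ^+ odd_perm s
    * (u * z) ^+ (sv s 1 - 1)
    * (v / d) ^+ (sv s 3 == 1)%N
    * (c / u) ^+ (sv s 1 == 3)%N
    * (d * w) ^+ (3 - sv s 3)
    * Phiy n m ((sv s 1)%:Z - 1) ((sv s 2)%:Z - 2) ((sv s 3)%:Z - 3)
           (z / q) (w / q) q.

End Defs.

(* Main.v *)
Require Import Defs.
From HB Require Import structures.
From mathcomp Require Import all_boot all_order all_algebra all_fingroup.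
From mathcomp Require Import ring zify.
Import Order.TTheory GRing.Theory Num.Theory.
Local Open Scope ring_scope.

Section L.
Variable R : fieldType.
Variable q : R.
Hypothesis hq : q != 0.
Implicit Types (k : int) (a : R).

Lemma qNS (i : nat) : q ^- i.+1 = q ^ (Negz i).
Proof. by []. Qed.

Lemma qS a k : 1 - a * q ^ k != 0 -> qpoch a q (k + 1) = qpoch a q k * (1 - a * q ^ k).
Proof.
case: k => [K|K] H.
  by rewrite -PoszD addn1 /qpoch big_ord_recr.
case: K H => [|K] H.
  by rewrite /= subnn big_ord0 big_ord1 mulrC; apply/esym/divff.
rewrite /qpoch.
have -> : Negz K.+1 + 1 = Negz K by rewrite !NegzE; lia.
by rewrite [in RHS]big_ord_recr invfM mulfVK.
Qed.

Definition good a := forall i : int, a * q ^ i != 1.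

Lemma good_f a k : good a -> 1 - a * q ^ k != 0.
Proof. by move=> ga; rewrite subr_eq0 eq_sym. Qed.

Lemma good_q a : good a -> good (a * q).
Proof.
move=> ga i; rewrite -mulrA -{1}(expr1z q) -expfzDr //.
Qed.

Lemma qpoch_neq0 a k : good a -> qpoch a q k != 0.
Proof.
move=> ga; case: k => [K|K] /=.
  by apply/prodf_neq0 => i _; exact: (good_f _ (Posz i) ga).
by rewrite invr_eq0; apply/prodf_neq0 => i _; exact: (good_f _ (Negz i) ga).
Qed.

Lemma int_uniq (f g h : int -> R) : f 0 = g 0 ->
  (forall k, f (k + 1) = f k * h k) -> (forall k, g (k + 1) = g k * h k) ->
  (forall k, h k != 0) -> forall k, f k = g k.
Proof.
move=> e0 hf hg hh; elim/int_rec => // [K IH|K IH].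
  by rewrite -addn1 PoszD hf hg IH.
have e : - (Posz K) = - (Posz K.+1) + 1 by lia.
move: IH; rewrite e hf hg => /(mulIf (hh _)).
by [].
Qed.

Lemma qshift a k : good a -> qpoch (a * q) q k = qpoch a q (k + 1) / (1 - a).
Proof.
move=> ga; have ga1 : 1 - a != 0 by have := good_f _ 0 ga; rewrite expr0z mulr1.
apply: (@int_uniq (fun k => qpoch (a * q) q k) (fun k => qpoch a q (k + 1) / (1 - a))
   (fun k => 1 - a * q * q ^ k)) => {k} [|k|k|k].
- by rewrite /qpoch /= add0n big_ord0 big_ord1 expr0 mulr1 divff.
- by rewrite (qS (a * q) k) //; apply: good_f; exact: good_q.
- rewrite qS; last exact: good_f.
  by rewrite mulrAC expfzDr // expr1z -mulrA [q ^ k * q]mulrC !mulrA.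
- by rewrite -mulrA -{1}(expr1z q) -expfzDr //; exact: good_f.
Qed.

Lemma qaddP a k (j : nat) : good a ->
  qpoch a q (k + Posz j) = qpoch a q k * \prod_(i < j) (1 - a * q ^ k * q ^+ i).
Proof.
move=> ga; elim: j => [|j IH]; first by rewrite addr0 big_ord0 mulr1.
have -> : k + Posz j.+1 = (k + Posz j) + 1 by lia.
rewrite (qS a (k + Posz j)); last exact: good_f.
rewrite IH big_ord_recr /= -mulrA expfzDr //. by rewrite [a * (_ * _)]mulrA.
Qed.

Lemma qaddN a k (j : nat) : good a ->
  qpoch a q (k - Posz j) = qpoch a q k / \prod_(i < j) (1 - a * (q ^ k / q ^+ j) * q ^+ i).
Proof.
move=> ga; have E := qaddP a (k - Posz j) j ga.
rewrite subrK expfzDr // -exprnN in E.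
rewrite E mulfK //.
apply/prodf_neq0 => i _; rewrite exprnN -expfzDr // -mulrA exprnP -expfzDr //.
exact: good_f.
Qed.

Lemma qqneg K : qpoch q q (Negz K) = 0.
Proof.
by rewrite /qpoch big_ord_recl /= expr1 divff // subrr mul0r invr0.
Qed.

Lemma nzA c k : c * q ^ k != 1 -> 1 - c * q ^ k != 0.
Proof. by rewrite subr_eq0 eq_sym. Qed.

Lemma nzB c k : c * q ^ (k - 1) != 1 -> q - c * q ^ k != 0.
Proof.
rewrite subr_eq0; apply: contra => /eqP E; apply/eqP.
by rewrite expfzDr // exprN1 mulrA -E divff.
Qed.

Hypothesis hqk : forall k : int, k != 0 -> q ^ k != 1.

Lemma iqP k : (qpoch q q (k - 1))^-1 = (1 - q ^ k) * (qpoch q q k)^-1.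
Proof.
case: k => [[|K]|K].
- by rewrite (_ : Posz 0 - 1 = Negz 0) // qqneg invr0 expr0z subrr mul0r.
- have -> : Posz K.+1 - 1 = Posz K by lia.
  have -> : Posz K.+1 = Posz K + 1 by lia.
  have hf : 1 - q * q ^ (Posz K) != 0.
    by rewrite -{1}(expr1z q) -expfzDr // subr_eq0 eq_sym hqk //; lia.
  rewrite (qS q (Posz K)) // expfzDr // expr1z [q ^ _ * q]mulrC.
  by rewrite invfM [RHS]mulrC divfK.
- have -> : Negz K - 1 = Negz K.+1 by rewrite !NegzE; lia.
  by rewrite !qqneg !invr0 mulr0.
Qed.

Lemma iqN k (j : nat) : (qpoch q q (k - Posz j))^-1 =
  \prod_(i < j) (1 - q ^ k / q ^+ i) * (qpoch q q k)^-1.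
Proof.
elim: j => [|j IH]; first by rewrite subr0 big_ord0 mul1r.
have -> : k - Posz j.+1 = (k - Posz j) - 1 by lia.
rewrite iqP IH big_ord_recr /= mulrA; congr (_ * _).
by rewrite mulrC expfzDr // -exprnN.
Qed.

Lemma qE_pos b k K (j : nat) : good b -> K = k + Posz j ->
  qpoch b q K = qpoch b q k * \prod_(i < j) (1 - b * q ^ k * q ^+ i).
Proof. by move=> gb ->; exact: qaddP. Qed.

Lemma qE_neg b k K (j : nat) : good b -> K = k - Posz j ->
  qpoch b q K = qpoch b q k / \prod_(i < j) (1 - b * (q ^ k / q ^+ j) * q ^+ i).
Proof. by move=> gb ->; exact: qaddN. Qed.

Lemma iqE k K (j : nat) : K = k - Posz j ->
  (qpoch q q K)^-1 = \prod_(i < j) (1 - q ^ k / q ^+ i) * (qpoch q q k)^-1.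
Proof. by move=> ->; exact: iqN. Qed.

Lemma qpoch2 b : qpoch b q 2 = (1 - b) * (1 - b * q).
Proof. by rewrite /qpoch /= !big_ord_recr big_ord0 /= mul1r expr0 mulr1 expr1. Qed.
End L.

Lemma det3 (R : comRingType) (A : 'M[R]_3) : \det A =
  A 0 0 * A 1 1 * A 2 2 - A 0 0 * A 1 2 * A 2 1 - A 0 1 * A 1 0 * A 2 2
  + A 0 1 * A 1 2 * A 2 0 + A 0 2 * A 1 0 * A 2 1 - A 0 2 * A 1 1 * A 2 0.
Proof.
rewrite (expand_det_row _ 0) !big_ord_recl big_ord0 /cofactor.
rewrite !(expand_det_row _ 0) !big_ord_recl !big_ord0 /cofactor !det_mx11 !mxE /=.
pose B (i j : nat) := A (inord i) (inord j).
have hA : forall i j, A i j = B i j by move=> i j; rewrite /B !inord_val.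
rewrite !hA /= /bump /=.
ring.
Qed.

Section S.
Variable R : fieldType.
Implicit Types (a q : R) (k : int).

Definition g6 (n m : int) (u v c d z w q : R) (i j : nat) : R :=
  let Z := z / q in let W := w / q in
  match i with
  | 0%N => (u * z) ^+ j * (c / u) ^+ (j == 2)%N
           * (qpoch q q (n - j%:Z))^-1 * (qpoch (Z * W * q) q (m + j%:Z))^-1
  | 1%N => (qpoch (Z * q) q (n - (j%:Z - 1)))^-1 * (qpoch (W * q) q (m + (j%:Z - 1)))^-1
  | _ => (v / d) ^+ (j == 0)%N * (d * w) ^+ (2 - j)
           * (qpoch (Z * W * q) q (n - (j%:Z - 2)))^-1 * (qpoch q q (m + (j%:Z - 2)))^-1
  end.

Lemma Phi6_det n m u v c d z w q :
  Phi6 n m u v c d z w q = qpoch (z / q * (w / q) * q) q (n + m) *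
    \det (\matrix_(i < 3, j < 3) g6 n m u v c d z w q i j).
Proof.
rewrite /determinant mulr_sumr; apply: eq_bigr => s _.
rewrite !big_ord_recl big_ord0 !mxE /sv /=.
have e0 : (inord 0 : 'I_3) = ord0 by apply/val_inj; rewrite /= inordK.
have e1 : (inord 1 : 'I_3) = lift ord0 ord0 by apply/val_inj; rewrite /= inordK.
have e2 : (inord 2 : 'I_3) = lift ord0 (lift ord0 ord0) by apply/val_inj; rewrite /= inordK.
rewrite e0 e1 e2.
move: (s ord0) (s (lift ord0 ord0)) (s (lift ord0 (lift ord0 ord0))) => a b c'.
have h1 : forall x : nat, (x.+1)%:Z - 1 = x%:Z by move=> x; lia.
have h2 : forall x : nat, (x.+1)%:Z - 2 = x%:Z - 1 by move=> x; lia.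
have h3 : forall x : nat, (x.+1)%:Z - 3 = x%:Z - 2 by move=> x; lia.
rewrite /Phiy h1 h2 h3 !eqSS !subSS /= ?subn1 ?subn0 !invfM.
repeat match goal with |- context [qpoch ?x ?y ?k] => let t := fresh "P" in set t := qpoch x y k; clearbody t end.
set X1 := (-1) ^+ _. set X2 := (u * z) ^+ _. set X3 := (v / d) ^+ _. set X4 := (c / u) ^+ _. set X5 := (d * w) ^+ _.
clearbody X1 X2 X3 X4 X5.
Time ring.
Qed.
End S.

Ltac solve_good := repeat apply: good_q; assumption.

Ltac tryoff q b k K :=
  first [ rewrite (@qE_pos _ q ltac:(assumption) b k K 1 ltac:(solve_good) ltac:(lia))
        | rewrite (@qE_pos _ q ltac:(assumption) b k K 0 ltac:(solve_good) ltac:(lia))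
        | rewrite (@qE_neg _ q ltac:(assumption) b k K 1 ltac:(solve_good) ltac:(lia))
        | rewrite (@qE_pos _ q ltac:(assumption) b k K 2 ltac:(solve_good) ltac:(lia))
        | rewrite (@qE_pos _ q ltac:(assumption) b k K 3 ltac:(solve_good) ltac:(lia))
        | rewrite (@qE_neg _ q ltac:(assumption) b k K 2 ltac:(solve_good) ltac:(lia)) ].

Ltac normb q n m :=
  repeat match goal with |- context [qpoch ?b q ?K] =>
    lazymatch b with q => fail | _ =>
    lazymatch K with n => fail | m => fail | n + m => fail | _ =>
    lazymatch K with
    | context [n] => lazymatch K with
                     | context [m] => tryoff q b (n + m) K
                     | _ => tryoff q b n K end
    | _ => tryoff q b m K end
    end end end.

Ltac normq q n m :=
  repeat match goal with |- context [(qpoch q q ?K)^-1] =>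
    lazymatch K with n => fail | m => fail | _ =>
    first [ rewrite (@iqE _ q ltac:(assumption) ltac:(assumption) n K 0 ltac:(lia))
          | rewrite (@iqE _ q ltac:(assumption) ltac:(assumption) n K 1 ltac:(lia))
          | rewrite (@iqE _ q ltac:(assumption) ltac:(assumption) n K 2 ltac:(lia))
          | rewrite (@iqE _ q ltac:(assumption) ltac:(assumption) m K 0 ltac:(lia))
          | rewrite (@iqE _ q ltac:(assumption) ltac:(assumption) m K 1 ltac:(lia))
          | rewrite (@iqE _ q ltac:(assumption) ltac:(assumption) m K 2 ltac:(lia)) ]
    end end.


Lemma part1 (R : fieldType) (u v z w q : R) (n m : int)
  (hq : q != 0)
  (hqk : forall k : int, k != 0 -> q ^ k != 1)
  (hz0 : z != 0) (hw0 : w != 0)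
  (hz : forall k : int, z * q ^ k != 1)
  (hw : forall k : int, w * q ^ k != 1)
  (hzw : forall k : int, z * w * q ^ k != 1) :
  Phi6 n m u v 1 1 z w q =
    (Phi4 n m u v z w q - z * w * q ^ (m - 1) * Phi4 n m (u / z) (v / w) z w q)
      / (1 - z * w * q ^-1).
Proof.
have gz : @good R q z by [].
have gw : @good R q w by [].
have ga : @good R q (z * w / q).
  by move=> i; rewrite -mulrA -exprN1 -expfzDr //; exact: hzw.
have E1 : z / q * (w / q) * q = z * w / q by field.
have E2 : z / q * q = z by field.
have E3 : w / q * q = w by field.
have E4 : z / q * w * q = z * w / q * q by field.
have E5 : z * q * (w / q) * q = z * w / q * q * q by field.
have E6 : z * (w * q) * q = z * w / q * q * q * q by field.
have E7 : z * w * q = z * w / q * q * q by field.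
rewrite Phi6_det det3 !mxE /g6 /=.
rewrite /Phi4 /Phi2 !(@qpoch2 R q) E1 E2 E3 E4 E5 E6 E7.
rewrite !qshift //; try solve_good.
normb q n m.
rewrite !invfM.
normq q n m.
have m1 : (1 %% 3 = 1)%N by [].
have m2 : ((1 %% 3 + 1 %% 3) %% 3 = 2)%N by [].
rewrite !m1 !m2 !big_ord_recr !big_ord0 /=.
rewrite !expfzDr // ?exprN1.
set X := q ^ n. set Y := q ^ m.
set A1 := qpoch (z * w / q) q (n + m).
set A2 := qpoch (z * w / q) q n.
set A3 := qpoch (z * w / q) q m.
set B1 := qpoch z q n.
set B2 := qpoch w q m.
set C1 := (qpoch q q n)^-1.
set C2 := (qpoch q q m)^-1.
rewrite ?expr0 ?expr1.
have f1 : q - z * w != 0.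
  by have := @nzB R q hq (z * w) 0 (hzw _); rewrite expr0z mulr1.
have f2 : 1 - z * w * q != 0.
  by have := @nzA R q (z * w) 1 (hzw _); rewrite expr1z.
have f3 : 1 - z * w != 0.
  by have := @nzA R q (z * w) 0 (hzw _); rewrite expr0z mulr1.
have f4 : 1 - z * w * Y != 0 := @nzA R q (z * w) m (hzw _).
have f5 : q - z * w * Y != 0 := @nzB R q hq (z * w) m (hzw _).
have f6 : A3 != 0 by apply: qpoch_neq0.
have f7 : 1 - w * q != 0.
  by have := @nzA R q w 1 (hw _); rewrite expr1z.
have f8 : 1 - w != 0.
  by have := @nzA R q w 0 (hw _); rewrite expr0z mulr1.
have f9 : 1 - w * Y != 0 := @nzA R q w m (hw _).
have f10 : B2 != 0 by apply: qpoch_neq0.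
have f11 : 1 - z * w * X != 0 := @nzA R q (z * w) n (hzw _).
have f12 : q - z * w * X != 0 := @nzB R q hq (z * w) n (hzw _).
have f13 : A2 != 0 by apply: qpoch_neq0.
have f14 : 1 - z != 0.
  by have := @nzA R q z 0 (hz _); rewrite expr0z mulr1.
have f15 : B1 != 0 by apply: qpoch_neq0.
have f17 : 1 - z * q != 0.
  by have := @nzA R q z 1 (hz _); rewrite expr1z.
have f18 : 1 - z * X != 0 := @nzA R q z n (hz _).
have f20 : q - w * Y != 0 := @nzB R q hq w m (hw _).
have f21 : q - z * X != 0 := @nzB R q hq z n (hz _).
have f22 : (1 : R) != 0 := oner_neq0 R.
have [->|hu] := eqVneq u 0.
  rewrite !mul1r !invr0.
  field.
  by repeat (apply/andP; split); try assumption.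
field.
by repeat (apply/andP; split); try assumption.
Qed.

Theorem lemma4p8 (R : fieldType) (u v z w q : R) (n m : int)
  (hq : q != 0)
  (hqk : forall k : int, k != 0 -> q ^ k != 1)
  (hz0 : z != 0) (hw0 : w != 0)
  (hz : forall k : int, z * q ^ k != 1)
  (hw : forall k : int, w * q ^ k != 1)
  (hzw : forall k : int, z * w * q ^ k != 1) :
  Phi6 n m u v 1 1 z w q =
    (Phi4 n m u v z w q - z * w * q ^ (m - 1) * Phi4 n m (u / z) (v / w) z w q)
      / (1 - z * w * q ^-1)
  /\
  Phi6 n m 1 1 1 1 z w q =
    (1 - z * w * q ^ (n + m - 1)) / (1 - z * w * q ^-1) * Phi2 n m z w q.
Proof.
split; first exact: part1.
rewrite part1 //.
have gz : @good R q z by [].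
have gw : @good R q w by [].
have ga : @good R q (z * w / q).
  by move=> i; rewrite -mulrA -exprN1 -expfzDr //; exact: hzw.
have E2 : z / q * q = z by field.
have E3 : w / q * q = w by field.
have E4 : z / q * w * q = z * w / q * q by field.
have E5 : z * q * (w / q) * q = z * w / q * q * q by field.
have E6 : z * (w * q) * q = z * w / q * q * q * q by field.
have E7 : z * w * q = z * w / q * q * q by field.
rewrite /Phi4 /Phi2 !(@qpoch2 R q) E2 E3 E4 E5 E6 E7.
rewrite !qshift //; try solve_good.
normb q n m.
rewrite !invfM.
normq q n m.
rewrite !big_ord_recr !big_ord0 /=.
rewrite !expfzDr // ?exprN1.
set X := q ^ n. set Y := q ^ m.
set A1 := qpoch (z * w / q) q (n + m).
set A2 := qpoch (z * w / q) q n.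
set A3 := qpoch (z * w / q) q m.
set B1 := qpoch z q n.
set B2 := qpoch w q m.
set C1 := (qpoch q q n)^-1.
set C2 := (qpoch q q m)^-1.
rewrite ?expr0 ?expr1.
have f1 : q - z * w != 0.
  by have := @nzB R q hq (z * w) 0 (hzw _); rewrite expr0z mulr1.
have f2 : 1 - z * w * q != 0.
  by have := @nzA R q (z * w) 1 (hzw _); rewrite expr1z.
have f3 : 1 - z * w != 0.
  by have := @nzA R q (z * w) 0 (hzw _); rewrite expr0z mulr1.
have f4 : 1 - z * w * Y != 0 := @nzA R q (z * w) m (hzw _).
have f5 : q - z * w * Y != 0 := @nzB R q hq (z * w) m (hzw _).
have f6 : A3 != 0 by apply: qpoch_neq0.
have f7 : 1 - w * q != 0.
  by have := @nzA R q w 1 (hw _); rewrite expr1z.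
have f8 : 1 - w != 0.
  by have := @nzA R q w 0 (hw _); rewrite expr0z mulr1.
have f9 : 1 - w * Y != 0 := @nzA R q w m (hw _).
have f10 : B2 != 0 by apply: qpoch_neq0.
have f11 : 1 - z * w * X != 0 := @nzA R q (z * w) n (hzw _).
have f12 : q - z * w * X != 0 := @nzB R q hq (z * w) n (hzw _).
have f13 : A2 != 0 by apply: qpoch_neq0.
have f14 : 1 - z != 0.
  by have := @nzA R q z 0 (hz _); rewrite expr0z mulr1.
have f15 : B1 != 0 by apply: qpoch_neq0.
have f17 : 1 - z * q != 0.
  by have := @nzA R q z 1 (hz _); rewrite expr1z.
have f18 : 1 - z * X != 0 := @nzA R q z n (hz _).
have f20 : q - w * Y != 0 := @nzB R q hq w m (hw _).
have f21 : q - z * X != 0 := @nzB R q hq z n (hz _).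
have f22 : (1 : R) != 0 := oner_neq0 R.
field.
by repeat (apply/andP; split); try assumption.
Qed.
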